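(* (a) ${\mathrm{stick}}\leq{\mathrm{stick}}'$. (b) If ${\mathrm{stick}}<\aleph_{\omega_1}$ then ${\mathrm{stick}}={\mathrm{stick}}'$; in particular then ${\mathrm{stick}}''\leq{\mathrm{stick}}$. (c) If $\lambda\leq\lambda'$ are cardinals then ${\mathrm{stick}}_\lambda\leq{\mathrm{stick}}_{\lambda'}$. (d) ${\mathrm{stick}}\leq{\mathrm{stick}}_{{\mathrm{stick}}}\leq{\mathrm{stick}}'$.
   Context: ${\mathrm{stick}}$ is the least cardinality of $X\subseteq[\omega_1]^{\aleph_0}$ such that every $y\in[\omega_1]^{\aleph_1}$ has a subset in $X$. ${\mathrm{stick}}'$ is the least cardinal $\kappa\geq\aleph_1$ for which there is $X\subseteq[\kappa]^{\aleph_0}$ with $|X|=\kappa$ such that every $y\in[\kappa]^{\aleph_1}$ has a subset in $X$. ${\mathrm{stick}}''$ is the least cardinal $\kappa\geq\aleph_1$ for which there is $X\subseteq[\kappa]^{\aleph_0}$ with $|X|=\kappa$ such that every $y\in[\kappa]^{\kappa}$ has a subset in $X$. For an (uncountable) cardinal $\lambda$, ${\mathrm{stick}}_\lambda$ is the least cardinality of $X\subseteq[\lambda]^{\aleph_0}$ such that every $y\in[\lambda]^{\aleph_1}$ has a subset in $X$. *)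

(* Defs.v *)
(* Cardinal combinatorics in type theory: a cardinal is
   represented by a type, comparison of cardinals by injections/bijections,
   subsets of a type T by predicates T -> Prop. *)
From Stdlib Require Import Classical.

Definition lecard (A B : Type) : Prop := exists f : A -> B, forall x y, f x = f y -> x = y.

Definition eqcard (A B : Type) : Prop :=
  exists f : A -> B, (forall x y, f x = f y -> x = y) /\ (forall b, exists a, f a = b).

Definition elt {T : Type} (Y : T -> Prop) : Type := {x : T | Y x}.

Definition ctbl_inf {T : Type} (Y : T -> Prop) : Prop := eqcard (elt Y) nat.

Definition incl {T : Type} (x y : T -> Prop) : Prop := forall a, x a -> y a.

(* (W, R) is (order-isomorphic to) omega_1: a strict well-order which is
   uncountable and all of whose proper initial segments are countable. *)
Definition is_omega1 (W : Type) (R : W -> W -> Prop) : Prop :=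
  well_founded R /\
  (forall a b c, R a b -> R b c -> R a c) /\
  (forall a b, R a b \/ a = b \/ R b a) /\
  ~ lecard W nat /\
  (forall w, lecard {v : W | R v w} nat).

Definition stick_family (K C : Type) (X : (K -> Prop) -> Prop) : Prop :=
  (forall x, X x -> ctbl_inf x) /\
  (forall y : K -> Prop, eqcard (elt y) C -> exists x, X x /\ incl x y).

(* S represents stick_lambda, where L represents lambda (uncountable) and
   W represents omega_1 (so |W| = aleph_1): the least cardinality of a
   family X \subseteq [L]^{aleph_0} such that every y \in [L]^{aleph_1}
   has a subset in X. *)
Definition is_stick_lam (W L S : Type) : Prop :=
  ~ lecard L nat /\
  (exists X, stick_family L W X /\ eqcard (elt X) S) /\
  (forall X, stick_family L W X -> lecard S (elt X)).

Definition is_stick (W S : Type) : Prop := is_stick_lam W W S.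

(* P represents stick': least kappa >= aleph_1 carrying X \subseteq
   [kappa]^{aleph_0} with |X| = kappa such that every y in [kappa]^{aleph_1}
   has a subset in X. *)
Definition is_stick' (W P : Type) : Prop :=
  (lecard W P /\ exists X, stick_family P W X /\ eqcard (elt X) P) /\
  (forall (K : Type) (X : (K -> Prop) -> Prop),
      lecard W K -> stick_family K W X -> eqcard (elt X) K -> lecard P K).

(* P represents stick'': as stick', but every y in [kappa]^kappa must have a
   subset in X. *)
Definition is_stick'' (W P : Type) : Prop :=
  (lecard W P /\ exists X, stick_family P P X /\ eqcard (elt X) P) /\
  (forall (K : Type) (X : (K -> Prop) -> Prop),
      lecard W K -> stick_family K K X -> eqcard (elt X) K -> lecard P K).

(* |S| < aleph_{omega_1}: the infinite cardinals <= |S| form a countable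
   collection, i.e. countably many subsets of S represent every infinite
   cardinality <= |S|.  (For infinite |S| = aleph_alpha this says alpha+1 is
   countable, i.e. alpha < omega_1; finite |S| trivially qualifies.) *)
Definition below_aleph_omega1 (S : Type) : Prop :=
  exists seq : nat -> (S -> Prop),
    forall Y : S -> Prop, lecard nat (elt Y) -> exists n, eqcard (elt Y) (elt (seq n)).

(* Main.v *)
Require Import Defs.
From Stdlib Require Import Cantor Classical ClassicalEpsilon FunctionalExtensionality PropExtensionality ProofIrrelevance.
From mathcomp Require ssreflect ssrbool eqtype boolp wochoice classical_sets.

Module Br.
Import ssreflect ssrbool eqtype.

Lemma ZL_prop (T : Type) (le : T -> T -> Prop) (t0 : T) :
  (forall t, le t t) -> (forall r s t, le r s -> le s t -> le r t) ->
  (forall C : T -> Prop, (forall a b, C a -> C b -> le a b \/ le b a) ->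
     exists u, forall a, C a -> le a u) ->
  exists m, forall a, le m a -> le a m.
Proof.
move=> Hr Ht Hc.
pose R := fun a b => boolp.asbool (le a b).
have H1 : forall t, R t t by move=> t; apply/boolp.asboolP.
have H2 : forall r s t, R r s -> R s t -> R r t.
  by move=> r s t /boolp.asboolP Ha /boolp.asboolP Hb; apply/boolp.asboolP; exact: Ht Ha Hb.
have H3 : forall A, classical_sets.total_on A R -> exists t, forall s, A s -> R s t.
  move=> A HA.
  have Htot : forall a b, A a -> A b -> le a b \/ le b a.
    by move=> a b Ha Hb; case: (HA a b Ha Hb) => /boolp.asboolP; auto.
  have [u Hu] := Hc A Htot.
  by exists u => s /Hu ?; apply/boolp.asboolP.
have [m Hm] := @classical_sets.ZL_preorder T t0 R H1 H2 H3.
exists m => a H. have := Hm a. move=> H4. apply/boolp.asboolP. apply: H4. by apply/boolp.asboolP.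
Qed.

Lemma WO_prop (T : Type) : exists lt : T -> T -> Prop,
  well_founded lt /\ (forall a b c, lt a b -> lt b c -> lt a c) /\
  (forall a b, lt a b \/ a = b \/ lt b a).
Proof.
elim/boolp.Peq: T => T.
have [R HR] := wochoice.well_ordering_principle T.
have Hmin : forall P : T -> Prop, forall x0, P x0 -> exists z, P z /\ forall x, P x -> R z x.
  move=> P x0 Px0.
  have Hne : wochoice.nonempty (fun x => boolp.asbool (P x)).
    by exists x0; rewrite unfold_in; apply/boolp.asboolP.
  have [z [[Hz1 Hz2] _]] := HR _ Hne.
  exists z; split.
    by move: Hz1; rewrite unfold_in => /boolp.asboolP.
  by move=> x Px; apply: Hz2; rewrite unfold_in; apply/boolp.asboolP.
have Hrefl : forall x, R x x.
  by move=> x; have [z [Hz1 Hz2]] := Hmin (fun y => y = x) x Logic.eq_refl; subst z; apply: Hz2.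
have Hanti : forall x y, R x y -> R y x -> x = y.
  move=> x y Hxy Hyx.
  have := HR (fun a => boolp.asbool (a = x \/ a = y)).
  have Hne : wochoice.nonempty (fun a => boolp.asbool (a = x \/ a = y)).
    by exists x; rewrite unfold_in; apply/boolp.asboolP; left.
  move=> /(_ Hne) [z [[Hz1 Hz2] Hu]].
  have Hx : wochoice.minimum_of R (fun a => boolp.asbool (a = x \/ a = y)) x.
    split; first by rewrite unfold_in; apply/boolp.asboolP; left.
    move=> a; rewrite unfold_in => /boolp.asboolP [->|->] //.
  have Hy : wochoice.minimum_of R (fun a => boolp.asbool (a = x \/ a = y)) y.
    split; first by rewrite unfold_in; apply/boolp.asboolP; right.
    move=> a; rewrite unfold_in => /boolp.asboolP [->|->] //.
  by rewrite -(Hu _ Hx) -(Hu _ Hy).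
have Htot : forall x y, R x y \/ R y x.
  move=> x y; have [z [Hz1 Hz2]] := Hmin (fun a => a = x \/ a = y) x (or_introl Logic.eq_refl).
  case: Hz1 => Ez; subst z.
    by left; apply: Hz2; right.
  by right; apply: Hz2; left.
exists (fun a b => R a b /\ a <> b).
split; last split.
- move=> a. apply: NNPP => Ha.
  have [z [Hz1 Hz2]] := Hmin (fun a => ~ Acc (fun a b => R a b /\ a <> b) a) a Ha.
  apply: Hz1; constructor => y [Hyz Hne]. apply: NNPP => Hy.
  by apply: Hne; apply: Hanti => //; apply: Hz2.
- move=> a b c [Hab Nab] [Hbc Nbc].
  have [z [Hz1 Hz2]] := Hmin (fun x => x = a \/ x = b \/ x = c) a (or_introl Logic.eq_refl).
  have Rac : R a c.
    case: Hz1 => [Ez|[Ez|Ez]]; subst z.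
    + by apply: Hz2; right; right.
    + have Eab : a = b by apply: Hanti => //; apply: Hz2; left.
      by rewrite Eab.
    + have Ebc : b = c by apply: Hanti => //; apply: Hz2; right; left.
      have Eac : a = c by apply: Hanti; [rewrite -Ebc | apply: Hz2; left].
      by rewrite Eac.
  split => // Eac. subst c. by apply: Nab; apply: Hanti.
- move=> a b. case: (classic (a = b)) => [->|Nab]; first by right; left.
  case: (Htot a b) => H; first by left.
  by right; right; split => // E; apply: Nab.
Qed.

End Br.


Set Bullet Behavior "Strict Subproofs".
Set Asymmetric Patterns.
Unset Asymmetric Patterns.

Lemma sig_eq {A : Type} {P : A -> Prop} (u v : {x : A | P x}) :
  proj1_sig u = proj1_sig v -> u = v.
Proof.
  destruct u as [x p], v as [y q]; simpl; intros E; subst y.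
  f_equal; apply proof_irrelevance.
Qed.

Lemma pred_ext {A : Type} (P Q : A -> Prop) : (forall a, P a <-> Q a) -> P = Q.
Proof. intros H; apply functional_extensionality; intros a; apply propositional_extensionality; auto. Qed.

Lemma fchoice (A B : Type) (Rl : A -> B -> Prop) :
  (forall x, exists y, Rl x y) -> exists f : A -> B, forall x, Rl x (f x).
Proof.
  intros H. exists (fun x => proj1_sig (constructive_indefinite_description _ (H x))).
  intros x. exact (proj2_sig (constructive_indefinite_description _ (H x))).
Qed.

Lemma fchoice_dep {A : Type} {B : A -> Type} {P : forall a, B a -> Prop} :
  (forall a, exists b, P a b) -> exists f : forall a, B a, forall a, P a (f a).
Proof.
  intros H. exists (fun x => proj1_sig (constructive_indefinite_description _ (H x))).
  intros x. exact (proj2_sig (constructive_indefinite_description _ (H x))).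
Qed.

Lemma lecard_refl A : lecard A A.
Proof. exists (fun x => x); auto. Qed.

Lemma lecard_trans A B C : lecard A B -> lecard B C -> lecard A C.
Proof.
  intros [f Hf] [g Hg]. exists (fun x => g (f x)). intros x y H; auto.
Qed.

Lemma eqcard_lecard A B : eqcard A B -> lecard A B.
Proof. intros [f [Hf _]]; exists f; exact Hf. Qed.

Lemma eqcard_refl A : eqcard A A.
Proof. exists (fun x => x); split; eauto. Qed.

Lemma eqcard_sym A B : eqcard A B -> eqcard B A.
Proof.
  intros [f [Hf Hs]].
  pose (g := fun b => proj1_sig (constructive_indefinite_description _ (Hs b))).
  assert (Hg : forall b, f (g b) = b).
  { intros b. exact (proj2_sig (constructive_indefinite_description _ (Hs b))). }
  exists g; split.
  - intros x y H. rewrite <- (Hg x), <- (Hg y), H. reflexivity.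
  - intros a. exists (f a). apply Hf. apply Hg.
Qed.

Lemma eqcard_trans A B C : eqcard A B -> eqcard B C -> eqcard A C.
Proof.
  intros [f [Hf Hfs]] [g [Hg Hgs]]. exists (fun x => g (f x)); split.
  - intros x y H; auto.
  - intros c. destruct (Hgs c) as [b Hb]. destruct (Hfs b) as [a Ha].
    exists a. subst; reflexivity.
Qed.

Lemma lecard_eqcard_l A B C : eqcard A B -> lecard B C -> lecard A C.
Proof. intros H1 H2; eapply lecard_trans; [apply eqcard_lecard; exact H1|exact H2]. Qed.
Lemma lecard_eqcard_r A B C : lecard A B -> eqcard B C -> lecard A C.
Proof. intros H1 H2; eapply lecard_trans; [exact H1|apply eqcard_lecard; exact H2]. Qed.

Section SB.
Variables (A B : Type) (f : A -> B) (g : B -> A).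
Hypothesis (Hf : forall x y, f x = f y -> x = y) (Hg : forall x y, g x = g y -> x = y).

Fixpoint Cn (n : nat) : A -> Prop :=
  match n with
  | 0 => fun a => ~ exists b, g b = a
  | S n => fun a => exists a', Cn n a' /\ g (f a') = a
  end.
Definition Cset a := exists n, Cn n a.

Lemma notC_range a : ~ Cset a -> exists b, g b = a.
Proof. intros H. apply NNPP; intros H'. apply H. exists 0. exact H'. Qed.

Definition sbh (a : A) : B :=
  match excluded_middle_informative (Cset a) with
  | left _ => f a
  | right H => proj1_sig (constructive_indefinite_description _ (notC_range a H))
  end.

Lemma sbh_notC a (H : ~ Cset a) : g (sbh a) = a.
Proof.
  unfold sbh. destruct (excluded_middle_informative (Cset a)) as [h|h].
  - contradiction.
  - exact (proj2_sig (constructive_indefinite_description _ (notC_range a h))).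
Qed.

Lemma sbh_C a (H : Cset a) : sbh a = f a.
Proof.
  unfold sbh. destruct (excluded_middle_informative (Cset a)) as [h|h]; [reflexivity|contradiction].
Qed.

Lemma SB_eqcard : eqcard A B.
Proof.
  exists sbh; split.
  - intros x y E.
    destruct (classic (Cset x)) as [Cx|Cx]; destruct (classic (Cset y)) as [Cy|Cy].
    + rewrite (sbh_C x Cx), (sbh_C y Cy) in E. auto.
    + exfalso. apply Cy. pose proof Cx as [n Hn]. exists (S n). exists x; split; auto.
      rewrite (sbh_C x Cx) in E. rewrite E. apply sbh_notC; auto.
    + exfalso. apply Cx. pose proof Cy as [n Hn]. exists (S n). exists y; split; auto.
      rewrite (sbh_C y Cy) in E. rewrite <- E. apply sbh_notC; auto.
    + rewrite <- (sbh_notC x Cx), <- (sbh_notC y Cy), E. reflexivity.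
  - intros b. destruct (classic (Cset (g b))) as [C|C].
    + destruct C as [n Hn]. destruct n as [|n].
      * exfalso. apply Hn. exists b; auto.
      * destruct Hn as [a' [Ha' E]]. apply Hg in E. exists a'.
        rewrite sbh_C; auto. exists n; auto.
    + exists (g b). apply Hg. apply sbh_notC. auto.
Qed.
End SB.

Lemma SB A B : lecard A B -> lecard B A -> eqcard A B.
Proof. intros [f Hf] [g Hg]. eapply SB_eqcard; eauto. Qed.

Lemma lecard_prod A A' B B' : lecard A A' -> lecard B B' -> lecard (A * B) (A' * B').
Proof.
  intros [f Hf] [g Hg]. exists (fun p => (f (fst p), g (snd p))).
  intros [a b] [c d] E. simpl in E. injection E; intros E2 E1.
  apply Hf in E1; apply Hg in E2; subst; reflexivity.
Qed.

Lemma lecard_sum A A' B B' : lecard A A' -> lecard B B' -> lecard (A + B) (A' + B').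
Proof.
  intros [f Hf] [g Hg]. exists (fun p => match p with inl a => inl (f a) | inr b => inr (g b) end).
  intros [a|b] [c|d] E; try discriminate; injection E; intros E1.
  - apply Hf in E1; subst; reflexivity.
  - apply Hg in E1; subst; reflexivity.
Qed.

Lemma nat2_nat : lecard (nat * nat) nat.
Proof.
  exists Cantor.to_nat. intros x y E.
  rewrite <- (Cantor.cancel_of_to x), <- (Cantor.cancel_of_to y), E. reflexivity.
Qed.

Lemma natsum_nat : lecard (nat + nat) nat.
Proof.
  eapply lecard_trans; [|apply nat2_nat].
  exists (fun p => match p with inl a => (0, a) | inr b => (1, b) end).
  intros [a|b] [c|d] E; try discriminate; injection E; intros; subst; reflexivity.
Qed.

Lemma option_lecard A : lecard A nat -> lecard (option A) nat.
Proof.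
  intros [f Hf]. exists (fun o => match o with None => 0 | Some a => S (f a) end).
  intros [a|] [b|] E; try discriminate; auto.
  injection E; intros E'; apply Hf in E'; subst; reflexivity.
Qed.

Lemma lecard_on {K B : Type} (P : K -> Prop) (b0 : B) :
  lecard (elt P) B -> exists f : K -> B, forall a b, P a -> P b -> f a = f b -> a = b.
Proof.
  intros [g Hg].
  exists (fun k => match excluded_middle_informative (P k) with
                   | left h => g (exist _ k h) | right _ => b0 end).
  intros a b Pa Pb.
  destruct (excluded_middle_informative (P a)) as [ha|ha]; [|contradiction].
  destruct (excluded_middle_informative (P b)) as [hb|hb]; [|contradiction].
  intros E. apply Hg in E. injection E; auto.
Qed.

Lemma compar (A B : Type) : lecard A B \/ lecard B A.
Proof.
  pose (PI := fun G : A -> B -> Prop =>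
     (forall a b1 b2, G a b1 -> G a b2 -> b1 = b2) /\ (forall a1 a2 b, G a1 b -> G a2 b -> a1 = a2)).
  pose (T := {G : A -> B -> Prop | PI G}).
  pose (le := fun G1 G2 : T => forall a b, proj1_sig G1 a b -> proj1_sig G2 a b).
  assert (P0 : PI (fun _ _ => False)) by (split; intros; contradiction).
  destruct (Br.ZL_prop T le (exist _ _ P0)) as [m Hm].
  - intros t a b H; exact H.
  - intros r s t H1 H2 a b H; auto.
  - intros C HC.
    pose (U := fun a b => exists G : T, C G /\ proj1_sig G a b).
    assert (PU : PI U).
    { split.
      - intros a b1 b2 [G1 [C1 H1]] [G2 [C2 H2]].
        destruct (HC _ _ C1 C2) as [L|L].
        + apply L in H1. exact (proj1 (proj2_sig G2) _ _ _ H1 H2).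
        + apply L in H2. exact (proj1 (proj2_sig G1) _ _ _ H1 H2).
      - intros a1 a2 b [G1 [C1 H1]] [G2 [C2 H2]].
        destruct (HC _ _ C1 C2) as [L|L].
        + apply L in H1. exact (proj2 (proj2_sig G2) _ _ _ H1 H2).
        + apply L in H2. exact (proj2 (proj2_sig G1) _ _ _ H1 H2). }
    exists (exist _ U PU). intros G CG a b H. exists G; auto.
  - destruct m as [G [PG1 PG2]]. unfold le in Hm; simpl in Hm.
    destruct (classic (forall a, exists b, G a b)) as [Hall|Hn].
    + left. destruct (fchoice _ _ _ Hall) as [f Hf]. exists f.
      intros x y E. apply (PG2 x y (f x)); auto. rewrite E; auto.
    + apply not_all_ex_not in Hn. destruct Hn as [a0 Ha0].
      destruct (classic (forall b, exists a, G a b)) as [Hall|Hn].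
      * right. destruct (fchoice _ _ _ Hall) as [f Hf]. exists f.
        intros x y E. apply (PG1 (f x) x y); auto. rewrite E; auto.
      * exfalso. apply not_all_ex_not in Hn. destruct Hn as [b0 Hb0].
        pose (G' := fun a b => G a b \/ (a = a0 /\ b = b0)).
        assert (PG' : PI G').
        { split.
          - intros a b1 b2 [H1|[E1 E1']] [H2|[E2 E2']]; subst; eauto;
              exfalso; apply Ha0; eauto.
          - intros a1 a2 b [K1|[F1 F1']] [K2|[F2 F2']]; subst; eauto;
              exfalso; apply Hb0; eauto. }
        assert (HG : G a0 b0).
        { apply (Hm (exist _ G' PG')). intros a b H; left; exact H. right; auto. }
        apply Ha0; eauto.
Qed.

Lemma infinite_two (K : Type) : lecard nat K -> lecard bool K.
Proof.
  intros [e He]. exists (fun b : bool => if b then e 0 else e 1).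
  intros [|] [|] E; auto; apply He in E; discriminate.
Qed.

Section Hessenberg.
Variable A : Type.
Hypothesis HA : lecard nat A.

Record HObj := mkH {
  hB : A -> Prop;
  hG : A -> A -> A -> Prop;
  h1 : lecard nat (elt hB);
  h2 : forall a b, hB a -> hB b -> exists c, hG a b c;
  h3 : forall a b c, hG a b c -> hB a /\ hB b /\ hB c;
  h4 : forall a b c c', hG a b c -> hG a b c' -> c = c';
  h5 : forall a b a' b' c, hG a b c -> hG a' b' c -> a = a' /\ b = b'
}.

Definition hle (p q : HObj) :=
  (forall a, hB p a -> hB q a) /\ (forall a b c, hG p a b c -> hG q a b c).

Lemma hobj_funct (p : HObj) : exists phi : elt (hB p) * elt (hB p) -> elt (hB p),
  forall u v, phi u = phi v -> u = v.
Proof.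
  assert (H : forall u : elt (hB p) * elt (hB p), exists c : elt (hB p),
      hG p (proj1_sig (fst u)) (proj1_sig (snd u)) (proj1_sig c)).
  { intros [[a Ha] [b Hb]]. simpl. destruct (h2 p a b Ha Hb) as [c Hc].
    destruct (h3 p _ _ _ Hc) as [_ [_ Hc']]. exists (exist _ c Hc'). exact Hc. }
  destruct (fchoice _ _ _ H) as [phi Hphi]. exists phi.
  intros [u1 u2] [v1 v2] E. pose proof (Hphi (u1, u2)) as H1. pose proof (Hphi (v1, v2)) as H2.
  simpl in *. rewrite E in H1. destruct (h5 p _ _ _ _ _ H1 H2) as [E1 E2].
  apply sig_eq in E1; apply sig_eq in E2; subst; reflexivity.
Qed.

Lemma hobj0 : HObj.
Proof.
  destruct (constructive_indefinite_description _ HA) as [e He].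
  pose (B0 := fun a => exists n, e n = a).
  pose (G0 := fun a b c => exists n m, e n = a /\ e m = b /\ c = e (Cantor.to_nat (n, m))).
  refine (mkH B0 G0 _ _ _ _ _).
  - exists (fun n => exist _ (e n) (ex_intro _ n eq_refl)). intros x y E. injection E; auto.
  - intros a b [n Hn] [m Hm]. exists (e (Cantor.to_nat (n, m))). exists n, m; auto.
  - intros a b c [n [m [E1 [E2 E3]]]]. subst. repeat split; eexists; eauto.
  - intros a b c c' [n [m [E1 [E2 E3]]]] [n' [m' [E1' [E2' E3']]]]. subst.
    apply He in E1'; apply He in E2'; subst; reflexivity.
  - intros a b a' b' c [n [m [E1 [E2 E3]]]] [n' [m' [E1' [E2' E3']]]]. subst.
    apply He in E3'. assert (E : (n, m) = (n', m')).
    { rewrite <- (Cantor.cancel_of_to (n, m)), <- (Cantor.cancel_of_to (n', m')), E3'. reflexivity. }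
    injection E; intros; subst; auto.
Defined.

Lemma hess_max : exists m : HObj, forall q, hle m q -> hle q m.
Proof.
  apply (Br.ZL_prop HObj hle hobj0).
  - intros t; split; auto.
  - intros r s t [H1 H2] [H3 H4]; split; auto.
  - intros C HC. destruct (classic (exists c0, C c0)) as [[c0 Cc0]|Hn].
    2:{ exists hobj0. intros a Ca. exfalso; apply Hn; eauto. }
    pose (UB := fun a => exists q, C q /\ hB q a).
    pose (UG := fun a b c => exists q, C q /\ hG q a b c).
    assert (Hjoin : forall q1 q2, C q1 -> C q2 -> exists q, C q /\ hle q1 q /\ hle q2 q).
    { intros q1 q2 C1 C2. destruct (HC _ _ C1 C2) as [L|L].
      - exists q2; repeat split; auto; apply L.
      - exists q1; repeat split; auto; apply L. }
    assert (U1 : lecard nat (elt UB)).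
    { destruct (h1 c0) as [e He].
      exists (fun n => exist _ (proj1_sig (e n)) (ex_intro _ c0 (conj Cc0 (proj2_sig (e n))))).
      intros x y E. apply He. apply sig_eq. injection E; auto. }
    assert (U2 : forall a b, UB a -> UB b -> exists c, UG a b c).
    { intros a b [q1 [C1 H1]] [q2 [C2 H2]]. destruct (Hjoin _ _ C1 C2) as [q [Cq [[L1 _] [L2 _]]]].
      destruct (h2 q a b (L1 _ H1) (L2 _ H2)) as [c Hc]. exists c, q; auto. }
    assert (U3 : forall a b c, UG a b c -> UB a /\ UB b /\ UB c).
    { intros a b c [q [Cq H]]. destruct (h3 q _ _ _ H) as [Ha [Hb Hc]].
      repeat split; exists q; auto. }
    assert (U4 : forall a b c c', UG a b c -> UG a b c' -> c = c').
    { intros a b c c' [q1 [C1 H1]] [q2 [C2 H2]]. destruct (Hjoin _ _ C1 C2) as [q [Cq [[_ L1] [_ L2]]]].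
      eapply (h4 q); eauto. }
    assert (U5 : forall a b a' b' c, UG a b c -> UG a' b' c -> a = a' /\ b = b').
    { intros a b a' b' c [q1 [C1 H1]] [q2 [C2 H2]]. destruct (Hjoin _ _ C1 C2) as [q [Cq [[_ L1] [_ L2]]]].
      eapply (h5 q); eauto. }
    exists (mkH UB UG U1 U2 U3 U4 U5). intros q Cq. split; simpl.
    + intros a H; exists q; auto.
    + intros a b c H; exists q; auto.
Qed.

Theorem hessenberg : lecard (A * A) A.
Proof.
  destruct hess_max as [m Hm].
  destruct (hobj_funct m) as [phi Hphi].
  set (B := hB m) in *.
  destruct (h1 m) as [e He]. fold B in e, He.
  assert (Hsum : lecard (elt B + elt B) (elt B)).
  { exists (fun s => match s with inl x => phi (x, e 0) | inr x => phi (x, e 1) end).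
    intros [x|x] [y|y] E; apply Hphi in E; apply pair_equal_spec in E; destruct E as [E1 E2];
      try (subst; reflexivity); apply He in E2; discriminate. }
  assert (HAB : lecard A (elt B)).
  { destruct (compar (elt (fun a => ~ B a)) (elt B)) as [[h Hh]|[k Hk]].
    - eapply lecard_trans; [|exact Hsum].
      exists (fun a => match excluded_middle_informative (B a) with
                       | left p => inl (exist _ a p)
                       | right p => inr (h (exist _ a p)) end).
      intros x y.
      destruct (excluded_middle_informative (B x)) as [px|px];
      destruct (excluded_middle_informative (B y)) as [py|py]; intros E; try discriminate;
        injection E; intros E'.
      + exact E'.
      + apply Hh in E'. injection E'; auto.
    - exfalso.
      pose (C := fun a => exists x, proj1_sig (k x) = a).
      (* coding of B' = B \/ C into bool * elt B *)
      pose (code := fun a => match excluded_middle_informative (B a) with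
                     | left p => (false, exist _ a p)
                     | right _ => match excluded_middle_informative (C a) with
                                  | left q => (true, proj1_sig (constructive_indefinite_description _ q))
                                  | right _ => (true, e 0) end end).
      assert (Hcode : forall a a', (B a \/ C a) -> (B a' \/ C a') -> code a = code a' -> a = a').
      { intros a a' Ha Ha'. unfold code.
        destruct (excluded_middle_informative (B a)) as [pa|pa];
        destruct (excluded_middle_informative (B a')) as [pa'|pa']; intros E.
        - injection E; auto.
        - destruct (excluded_middle_informative (C a')); discriminate.
        - destruct (excluded_middle_informative (C a)); discriminate.
        - destruct Ha as [Ha|Ha]; [contradiction|]. destruct Ha' as [Ha'|Ha']; [contradiction|].
          destruct (excluded_middle_informative (C a)) as [qa|qa]; [|contradiction].
          destruct (excluded_middle_informative (C a')) as [qa'|qa']; [|contradiction].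
          injection E; intros E'.
          pose proof (proj2_sig (constructive_indefinite_description _ qa)) as X1.
          pose proof (proj2_sig (constructive_indefinite_description _ qa')) as X2.
          simpl in X1, X2. rewrite E' in X1. congruence. }
      pose (delta := fun t1 t2 : bool => e (if t1 then (if t2 then 0 else 1) else (if t2 then 2 else 3))).
      assert (Hdelta : forall t1 t2 s1 s2, delta t1 t2 = delta s1 s2 -> t1 = s1 /\ t2 = s2).
      { intros t1 t2 s1 s2 E. apply He in E. destruct t1, t2, s1, s2; try discriminate; auto. }
      pose (J := fun a b => proj1_sig (k (phi (phi (snd (code a), snd (code b)),
                                            delta (fst (code a)) (fst (code b)))))).
      assert (HJ : forall a b a' b', (B a \/ C a) -> (B b \/ C b) -> (B a' \/ C a') -> (B b' \/ C b') ->
                 J a b = J a' b' -> a = a' /\ b = b').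
      { intros a b a' b' Ha Hb Ha' Hb' E. unfold J in E. apply sig_eq in E. apply Hk in E.
        apply Hphi in E. injection E; intros E2 E1. apply Hphi in E1. injection E1; intros E4 E3.
        apply Hdelta in E2. destruct E2 as [E5 E6].
        split; apply Hcode; auto.
        - destruct (code a), (code a'); simpl in *; subst; auto.
        - destruct (code b), (code b'); simpl in *; subst; auto. }
      assert (HJC : forall a b, C (J a b)).
      { intros a b. unfold J. eexists; reflexivity. }
      assert (HCB : forall a, C a -> ~ B a).
      { intros a [x Hx]. subst. exact (proj2_sig (k x)). }
      pose (B' := fun a => B a \/ C a).
      pose (G' := fun a b c => hG m a b c \/ (B' a /\ B' b /\ ~ (B a /\ B b) /\ c = J a b)).
      assert (Hm1 : lecard nat (elt B')).
      { exists (fun n => exist B' (proj1_sig (e n)) (or_introl (proj2_sig (e n)))).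
        intros x y E. apply He. apply sig_eq. injection E; auto. }
      assert (Hm2 : forall a b, B' a -> B' b -> exists c, G' a b c).
      { intros a b Ha Hb. destruct (classic (B a /\ B b)) as [[Ba Bb]|N].
        - destruct (h2 m a b Ba Bb) as [c Hc]. exists c; left; auto.
        - exists (J a b). right; auto. }
      assert (Hm3 : forall a b c, G' a b c -> B' a /\ B' b /\ B' c).
      { intros a b c [H|[Ha [Hb [_ Hc]]]].
        - destruct (h3 m _ _ _ H) as [Ha [Hb Hc]]. unfold B'; auto.
        - subst. unfold B'; repeat split; auto. }
      assert (Hm4 : forall a b c c', G' a b c -> G' a b c' -> c = c').
      { intros a b c c' [H|[Ha [Hb [N Hc]]]] [H'|[Ha' [Hb' [N' Hc']]]].
        - eapply (h4 m); eauto.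
        - exfalso; apply N'. destruct (h3 m _ _ _ H) as [? [? _]]; auto.
        - exfalso; apply N. destruct (h3 m _ _ _ H') as [? [? _]]; auto.
        - congruence. }
      assert (Hm5 : forall a b a' b' c, G' a b c -> G' a' b' c -> a = a' /\ b = b').
      { intros a b a' b' c [H|[Ha [Hb [N Hc]]]] [H'|[Ha' [Hb' [N' Hc']]]].
        - eapply (h5 m); eauto.
        - exfalso. destruct (h3 m _ _ _ H) as [_ [_ Bc]]. apply (HCB c); auto. subst; apply HJC.
        - exfalso. destruct (h3 m _ _ _ H') as [_ [_ Bc]]. apply (HCB c); auto. subst; apply HJC.
        - subst. apply HJ; auto. }
      pose (m' := mkH B' G' Hm1 Hm2 Hm3 Hm4 Hm5).
      assert (L : hle m m').
      { split; simpl.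
        - intros a H; left; exact H.
        - intros a b c H; left; exact H. }
      destruct (Hm m' L) as [L1 _]. simpl in L1.
      assert (Cx : C (proj1_sig (k (e 0)))) by (eexists; reflexivity).
      apply (HCB _ Cx). apply L1. right; exact Cx. }
  eapply lecard_trans; [apply lecard_prod; exact HAB; exact HAB|].
  eapply lecard_trans; [exists phi; exact Hphi|].
  exists (@proj1_sig _ _). intros x y E; apply sig_eq; exact E.
Qed.
End Hessenberg.

Lemma inf_sum (K : Type) : lecard nat K -> lecard (K + K) K.
Proof.
  intros H. eapply lecard_trans; [|apply hessenberg; exact H].
  destruct H as [e He].
  exists (fun s => match s with inl x => (x, e 0) | inr x => (x, e 1) end).
  intros [x|x] [y|y] E; apply pair_equal_spec in E; destruct E as [E1 E2];
      try (subst; reflexivity); apply He in E2; discriminate.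
Qed.

Lemma nat_le (Z : Type) : ~ lecard Z nat -> lecard nat Z.
Proof. intros H. destruct (compar nat Z) as [H1|H1]; [exact H1|contradiction]. Qed.

Definition img {K K' : Type} (f : K -> K') (y : K -> Prop) : K' -> Prop :=
  fun k' => exists k, y k /\ f k = k'.

Lemma img_eqcard {K K' : Type} (f : K -> K') (Hf : forall a b, f a = f b -> a = b) (y : K -> Prop) :
  eqcard (elt y) (elt (img f y)).
Proof.
  exists (fun u => exist (img f y) (f (proj1_sig u)) (ex_intro _ (proj1_sig u) (conj (proj2_sig u) eq_refl))).
  split.
  - intros u v E. apply sig_eq. apply Hf. injection E; auto.
  - intros [k' [k [Hk E]]]. exists (exist _ k Hk). apply sig_eq. simpl. exact E.
Qed.

Lemma pre_eqcard {K K' : Type} (f : K -> K') (Hf : forall a b, f a = f b -> a = b) (x : K' -> Prop) :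
  (forall a, x a -> exists k, f k = a) -> eqcard (elt (fun k => x (f k))) (elt x).
Proof.
  intros Hr. exists (fun u => exist x (f (proj1_sig u)) (proj2_sig u)). split.
  - intros u v E. apply sig_eq. apply Hf. injection E; auto.
  - intros [a Ha]. destruct (Hr a Ha) as [k Hk]. subst a.
    exists (exist (fun k => x (f k)) k Ha). apply sig_eq. reflexivity.
Qed.

Lemma subset_lecard {K : Type} (x y : K -> Prop) : incl x y -> lecard (elt x) (elt y).
Proof.
  intros H. exists (fun u => exist y (proj1_sig u) (H _ (proj2_sig u))).
  intros u v E. apply sig_eq. injection E; auto.
Qed.

Lemma elt_lecard {K : Type} (x : K -> Prop) : lecard (elt x) K.
Proof. exists (@proj1_sig _ _). intros u v E; apply sig_eq; exact E. Qed.

Lemma pullback (K K' C : Type) (f : K -> K') (Hf : forall a b, f a = f b -> a = b)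
  (X' : (K' -> Prop) -> Prop) :
  stick_family K' C X' -> exists X, stick_family K C X /\ lecard (elt X) (elt X').
Proof.
  intros [HX1 HX2].
  pose (X := fun x => exists x', X' x' /\ (forall a, x' a -> exists k, f k = a) /\ x = (fun k => x' (f k))).
  exists X. split; [split|].
  - intros x [x' [Hx' [Hr E]]]. subst x. unfold ctbl_inf.
    eapply eqcard_trans; [apply pre_eqcard; auto|]. apply HX1; auto.
  - intros y Hy. destruct (HX2 (img f y)) as [x' [Hx' Hinc]].
    + eapply eqcard_trans; [apply eqcard_sym, img_eqcard; auto|exact Hy].
    + exists (fun k => x' (f k)). split.
      * exists x'; repeat split; auto. intros a Ha. destruct (Hinc a Ha) as [k [_ Hk]]; eauto.
      * intros k Hk. destruct (Hinc _ Hk) as [k0 [Hk0 E]]. apply Hf in E. subst; auto.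
  - assert (H : forall u : elt X, exists v : elt X', proj1_sig u = (fun k => proj1_sig v (f k))).
    { intros [x [x' [Hx' [Hr E]]]]. exists (exist _ x' Hx'). simpl. exact E. }
    destruct (fchoice _ _ _ H) as [g Hg]. exists g.
    intros u v E. apply sig_eq. rewrite (Hg u), (Hg v), E. reflexivity.
Qed.

Lemma cover_lecard (K Q : Type) (Y : K -> Prop) (phi : Q -> K) :
  (forall a, Y a \/ exists q, phi q = a) -> lecard K (elt Y + Q).
Proof.
  intros H.
  destruct (fchoice K (elt Y + Q) (fun a s => match s with inl u => proj1_sig u = a | inr q => phi q = a end))
    as [c Hc].
  - intros a. destruct (H a) as [Ya|[q Hq]].
    + exists (inl (exist _ a Ya)). reflexivity.
    + exists (inr q). exact Hq.
  - exists c. intros a b E. pose proof (Hc a) as Ha. pose proof (Hc b) as Hb. rewrite E in Ha.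
    destruct (c b); congruence.
Qed.

Section Omega1.
Variables (W : Type) (R : W -> W -> Prop).
Hypothesis HW : is_omega1 W R.

Lemma wrec (A : Type) (P : forall w : W, (forall v, R v w -> A) -> A -> Prop) :
  (forall w h, exists a, P w h a) -> exists g : W -> A, forall w, P w (fun v _ => g v) (g w).
Proof.
  intros H. destruct HW as [wf _].
  pose (F := fun w h => proj1_sig (constructive_indefinite_description _ (H w h))).
  pose (g := Fix wf (fun _ => A) F).
  exists g. intros w.
  assert (E : g w = F w (fun v _ => g v)).
  { unfold g. refine (Fix_eq wf (fun _ => A) F _ w). intros x f1 f2 Hf.
    assert (E : f1 = f2).
    { apply functional_extensionality_dep; intros y. apply functional_extensionality_dep; intros p. auto. }
    rewrite E; reflexivity. }
  rewrite E. exact (proj2_sig (constructive_indefinite_description _ (H w (fun v _ => g v)))).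
Qed.

Lemma W_inj_of (A : Type) (g : W -> A) :
  (forall w v, R v w -> g v <> g w) -> forall a b, g a = g b -> a = b.
Proof.
  intros H a b E. destruct HW as [_ [_ [tri _]]].
  destruct (tri a b) as [L|[L|L]]; auto.
  - exfalso; apply (H b a L E).
  - exfalso; apply (H a b L). auto.
Qed.

Lemma U1 (Z : Type) : ~ lecard Z nat -> lecard W Z.
Proof.
  intros HZ.
  destruct (wrec Z (fun w h z => forall v (p : R v w), h v p <> z)) as [g Hg].
  - intros w h. apply NNPP; intros N.
    assert (Hall : forall z, exists u : {v | R v w}, h (proj1_sig u) (proj2_sig u) = z).
    { intros z. apply NNPP; intros N2. apply N. exists z. intros v p E. apply N2.
      exists (exist _ v p). exact E. }
    destruct (fchoice _ _ _ Hall) as [c Hc]. apply HZ.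
    eapply lecard_trans; [|destruct HW as [_ [_ [_ [_ H5]]]]; apply (H5 w)].
    exists c. intros x y E. rewrite <- (Hc x), <- (Hc y), E. reflexivity.
  - exists g. apply W_inj_of. intros w v p. apply (Hg w v p).
Qed.

Lemma unc_eq (Z : Type) : ~ lecard Z nat -> lecard Z W -> eqcard Z W.
Proof. intros H1 H2. apply SB; auto. apply U1; auto. Qed.

Lemma W_inh : inhabited W.
Proof.
  destruct HW as [_ [_ [_ [H4 _]]]]. apply NNPP; intros N. apply H4.
  exists (fun w => False_rect nat (N (inhabits w))). intros x; exfalso; apply N; constructor; auto.
Qed.

Lemma nat_W : lecard nat W.
Proof. apply nat_le. destruct HW as [_ [_ [_ [H4 _]]]]. exact H4. Qed.

Lemma stick_ge (X : (W -> Prop) -> Prop) : stick_family W W X -> lecard W (elt X).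
Proof.
  intros [HX1 HX2].
  destruct W_inh as [w0].
  pose (pt := fun x : W -> Prop => epsilon (inhabits w0) x).
  assert (Hpt : forall x, X x -> x (pt x)).
  { intros x Hx. apply epsilon_spec. destruct (HX1 x Hx) as [f [_ Hs]].
    destruct (Hs 0) as [[a Ha] _]. eauto. }
  destruct (wrec (W -> Prop) (fun w h x => X x /\ incl x (fun a => forall v (p : R v w), a <> pt (h v p))))
    as [g Hg].
  - intros w h. apply HX2. apply unc_eq; [|apply elt_lecard].
    intros Hc. destruct HW as [_ [_ [_ [H4 H5]]]]. apply H4.
    eapply lecard_trans; [|apply natsum_nat].
    eapply lecard_trans; [|apply lecard_sum; [exact Hc|apply (H5 w)]].
    apply cover_lecard with (phi := fun u : {v | R v w} => pt (h (proj1_sig u) (proj2_sig u))).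
    intros a. destruct (classic (forall v (p : R v w), a <> pt (h v p))) as [Y|N]; [left; exact Y|right].
    apply not_all_ex_not in N. destruct N as [v N]. apply not_all_ex_not in N. destruct N as [p N].
    apply NNPP in N. exists (exist _ v p). simpl. auto.
  - assert (Hi : forall a b, g a = g b -> a = b).
    { apply W_inj_of. intros w v p E. destruct (Hg v) as [Xv _]. destruct (Hg w) as [_ Iw].
      assert (Hin : g w (pt (g v))) by (rewrite <- E; apply Hpt; auto).
      exact (Iw _ Hin v p eq_refl). }
    exists (fun w => exist X (g w) (proj1 (Hg w))). intros a b E. apply Hi. injection E; auto.
Qed.
End Omega1.

Lemma lecard_by (A B : Type) (Rl : A -> B -> Prop) :
  (forall a, exists b, Rl a b) -> (forall a a' b, Rl a b -> Rl a' b -> a = a') -> lecard A B.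
Proof.
  intros H1 H2. destruct (fchoice _ _ _ H1) as [f Hf]. exists f.
  intros x y E. apply (H2 x y (f x)); auto. rewrite E; auto.
Qed.

Section Core.
Variables (W : Type) (R : W -> W -> Prop) (HW : is_omega1 W R) (S : Type) (X0 : (W -> Prop) -> Prop).
Hypotheses (HX0 : stick_family W W X0) (E0 : eqcard (elt X0) S) (HWS : lecard W S)
  (Hb : below_aleph_omega1 S).
Variable lt : S -> S -> Prop.
Hypotheses (lt_wf : well_founded lt) (lt_tr : forall a b c, lt a b -> lt b c -> lt a c)
  (lt_tri : forall a b, lt a b \/ a = b \/ lt b a).

Definition GoodT (K : Type) := exists F, stick_family K W F /\ lecard (elt F) S.

Lemma good_inj K K' : lecard K K' -> GoodT K' -> GoodT K.
Proof.
  intros [f Hf] [F [HF LF]]. destruct (pullback K K' W f Hf F HF) as [X [HX LX]].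
  exists X; split; auto. eapply lecard_trans; eauto.
Qed.

Lemma good_W : GoodT W.
Proof. exists X0; split; auto. apply eqcard_lecard; auto. Qed.

Lemma nat_S : lecard nat S.
Proof. eapply lecard_trans; [apply (nat_W W R HW)|exact HWS]. Qed.

Definition Iseg t := fun s => lt s t.

Lemma Lstep (D : S -> Prop) (Hdc : forall a b, D b -> lt a b -> D a)
  (IH : forall t, D t -> GoodT (elt (Iseg t))) : GoodT (elt D).
Proof.
  destruct (W_inh W R HW) as [w0].
  destruct HWS as [fWS HfWS].
  pose (s0 := fWS w0).
  destruct (classic (exists t, D t /\ lecard (elt D) (elt (Iseg t)))) as [[t [Dt Le]]|NA].
  { eapply good_inj; eauto. }
  destruct (classic (exists y : elt D -> Prop, eqcard (elt y) W /\
      forall t, D t -> lecard (elt (fun d : elt D => y d /\ lt (proj1_sig d) t)) nat)) as [Bb|Ba].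
  2:{ (* union case *)
    assert (Ba' : forall y : elt D -> Prop, eqcard (elt y) W -> exists t, D t /\
        ~ lecard (elt (fun d : elt D => y d /\ lt (proj1_sig d) t)) nat).
    { intros y Hy. apply NNPP; intros N. apply Ba. exists y; split; auto.
      intros t Dt. apply NNPP; intros N2. apply N; eauto. }
    clear Ba.
    assert (Hfam : forall t, exists F : (elt (Iseg t) -> Prop) -> Prop,
        D t -> stick_family (elt (Iseg t)) W F /\ lecard (elt F) S).
    { intros t. destruct (classic (D t)) as [Dt|NDt].
      - destruct (IH t Dt) as [F HF]. exists F; auto.
      - exists (fun _ => False); intros; contradiction. }
    pose (Fam := fun t => proj1_sig (constructive_indefinite_description _ (Hfam t))).
    assert (HFam : forall t, D t -> stick_family (elt (Iseg t)) W (Fam t) /\ lecard (elt (Fam t)) S).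
    { intros t. exact (proj2_sig (constructive_indefinite_description _ (Hfam t))). }
    assert (Hinj : forall t, exists f : elt (Fam t) -> S, D t -> forall u v, f u = f v -> u = v).
    { intros t. destruct (classic (D t)) as [Dt|NDt].
      - destruct (proj2 (HFam t Dt)) as [f Hf]; exists f; auto.
      - exists (fun _ => s0); intros; contradiction. }
    destruct (fchoice_dep Hinj) as [inj Hinj'].
    pose (iota := fun t (Dt : D t) (e : elt (Iseg t)) =>
                    exist D (proj1_sig e) (Hdc _ _ Dt (proj2_sig e))).
    assert (Hiota : forall t Dt e1 e2, iota t Dt e1 = iota t Dt e2 -> e1 = e2).
    { intros t Dt e1 e2 E. apply sig_eq. injection E; auto. }
    pose (push := fun t (x' : elt (Iseg t) -> Prop) (d : elt D) =>
                    exists e : elt (Iseg t), x' e /\ proj1_sig e = proj1_sig d).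
    assert (Hpush : forall t Dt x', push t x' = img (iota t Dt) x').
    { intros t Dt x'. apply pred_ext. intros d. split.
      - intros [e [He E]]. exists e; split; auto. apply sig_eq. exact E.
      - intros [e [He E]]. exists e; split; auto. rewrite <- E. reflexivity. }
    pose (F := fun x : elt D -> Prop => exists t, exists x' : elt (Iseg t) -> Prop,
                 D t /\ Fam t x' /\ x = push t x').
    exists F. split; [split|].
    - intros x [t [x' [Dt [Fx E]]]]. subst x. rewrite (Hpush t Dt).
      unfold ctbl_inf. eapply eqcard_trans; [apply eqcard_sym, img_eqcard; apply Hiota|].
      apply (proj1 (proj1 (HFam t Dt))); auto.
    - intros y Hy. destruct (Ba' y Hy) as [t [Dt Hunc]].
      pose (y' := fun e : elt (Iseg t) => y (iota t Dt e)).
      assert (Hy' : eqcard (elt y') W).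
      { apply (unc_eq W R HW).
        - intros Hc. apply Hunc. eapply lecard_trans; [|exact Hc].
          apply lecard_by with (Rl := fun u v => proj1_sig (proj1_sig v) = proj1_sig (proj1_sig u)).
          + intros [d [yd ld]]. 
            assert (E : iota t Dt (exist _ (proj1_sig d) ld) = d) by (apply sig_eq; reflexivity).
            assert (Hv : y' (exist _ (proj1_sig d) ld)) by (unfold y'; rewrite E; exact yd).
            exists (exist _ _ Hv). reflexivity.
          + intros u u' v E1 E2. apply sig_eq. apply sig_eq. exact (eq_trans (eq_sym E1) E2).
        - eapply lecard_trans; [|apply eqcard_lecard; exact Hy].
          apply lecard_by with (Rl := fun u v => proj1_sig v = iota t Dt (proj1_sig u)).
          + intros [e ye]. exists (exist y (iota t Dt e) ye). reflexivity.
          + intros u u' v E1 E2. apply sig_eq. apply (Hiota t Dt). exact (eq_trans (eq_sym E1) E2). }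
      destruct (proj2 (proj1 (HFam t Dt)) y' Hy') as [x' [Fx' Ix']].
      exists (push t x'). split.
      + exists t, x'; auto.
      + intros d [e [He E]]. pose proof (Ix' e He) as H. unfold y' in H.
        assert (E2 : iota t Dt e = d) by (apply sig_eq; exact E).
        rewrite <- E2; exact H.
    - eapply lecard_trans; [|apply hessenberg, nat_S].
      apply lecard_by with (Rl := fun (u : elt F) (p : S * S) => exists t x' (H : Fam t x'),
          D t /\ proj1_sig u = push t x' /\ p = (t, inj t (exist _ x' H))).
      + intros [x [t [x' [Dt [Fx E]]]]]. exists (t, inj t (exist _ x' Fx)). exists t, x', Fx. auto.
      + intros u u' p [t [x' [H [Dt [Eu Ep]]]]] [t2 [x2 [H2 [Dt2 [Eu2 Ep2]]]]].
        subst p. injection Ep2; intros E2 E1. subst t2.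
        apply (Hinj' t Dt) in E2. injection E2; intros E3. subst x2.
        apply sig_eq. congruence. }
  (* the cofinal omega_1 case *)
  destruct Bb as [y [Ey Hcnt]].
  apply (good_inj (elt D) W); [|exact good_W].
  destruct nat_S as [e0 He0].
  pose (N0 := fun s => exists m, e0 m = s).
  pose (Z := fun (a : elt D) s => lt s (proj1_sig a) \/ N0 s).
  destruct Hb as [sq Hsq].
  assert (Hnn : forall a : elt D, exists n, eqcard (elt (Z a)) (elt (sq n))).
  { intros a. apply Hsq. exists (fun m => exist (Z a) (e0 m) (or_intror (ex_intro _ m eq_refl))).
    intros m1 m2 E. apply He0. injection E; auto. }
  destruct (fchoice _ _ _ Hnn) as [nn Hnn'].
  assert (HWn : ~ lecard W nat) by (destruct HW as [_ [_ [_ [H4 _]]]]; exact H4).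
  assert (Hfib : exists n, ~ lecard (elt (fun d => y d /\ nn d = n)) nat).
  { apply NNPP; intros N.
    assert (Hf : forall n, exists f : elt D -> nat,
               forall a b, (y a /\ nn a = n) -> (y b /\ nn b = n) -> f a = f b -> a = b).
    { intros n. apply (lecard_on _ 0). apply NNPP; intros N2. apply N; eauto. }
    destruct (fchoice _ _ _ Hf) as [fib Hfib].
    apply HWn. eapply lecard_trans; [apply eqcard_lecard, eqcard_sym; exact Ey|].
    eapply lecard_trans; [|apply nat2_nat].
    apply lecard_by with (Rl := fun (u : elt y) p =>
        p = (nn (proj1_sig u), fib (nn (proj1_sig u)) (proj1_sig u))).
    - intros u; eexists; reflexivity.
    - intros u u' p E1 E2. subst p. apply pair_equal_spec in E2. destruct E2 as [E4 E3].
      rewrite <- E4 in E3. apply sig_eq.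
      exact (Hfib (nn (proj1_sig u)) _ _ (conj (proj2_sig u) eq_refl)
               (conj (proj2_sig u') (eq_sym E4)) E3). }
  destruct Hfib as [n Hy1].
  pose (y1 := fun d => y d /\ nn d = n).
  assert (Hcof : forall d : elt D, exists a, y1 a /\ lt (proj1_sig d) (proj1_sig a)).
  { intros d. apply NNPP; intros N. apply Hy1.
    eapply lecard_trans; [|apply option_lecard; apply (Hcnt (proj1_sig d) (proj2_sig d))].
    apply lecard_by with (Rl := fun (u : elt y1) o => match o with
          | None => proj1_sig u = d
          | Some v => proj1_sig v = proj1_sig u end).
    - intros u. destruct (lt_tri (proj1_sig (proj1_sig u)) (proj1_sig d)) as [L|[L|L]].
      + exists (Some (exist (fun d0 : elt D => y d0 /\ lt (proj1_sig d0) (proj1_sig d))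
                 (proj1_sig u) (conj (proj1 (proj2_sig u)) L))). reflexivity.
      + exists None. apply sig_eq. exact L.
      + exfalso. apply N. exists (proj1_sig u). split; [exact (proj2_sig u)|exact L].
    - intros u u' [v|] E1 E2; apply sig_eq;
        [exact (eq_trans (eq_sym E1) E2)|exact (eq_trans E1 (eq_sym E2))]. }
  destruct (fchoice _ _ _ Hcof) as [cof Hcof'].
  destruct (lecard_on y w0 (eqcard_lecard _ _ Ey)) as [phi Hphi].
  assert (Hne : exists a0, y1 a0).
  { apply NNPP; intros N. apply Hy1.
    exists (fun u => False_rect nat (N (ex_intro _ (proj1_sig u) (proj2_sig u)))).
    intros u; exfalso; apply N; exists (proj1_sig u); exact (proj2_sig u). }
  destruct Hne as [a0 Ha0].
  pose (M := elt (sq n)).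
  assert (HZM : forall a, y1 a -> eqcard (elt (Z a)) M).
  { intros a [_ Ea]. unfold M. rewrite <- Ea. apply Hnn'. }
  destruct (HZM a0 Ha0) as [g0 _].
  pose (m0 := g0 (exist (Z a0) (e0 0) (or_intror (ex_intro _ 0 eq_refl)))).
  assert (Hpsi : forall a, exists f : S -> M,
             y1 a -> forall s1 s2, Z a s1 -> Z a s2 -> f s1 = f s2 -> s1 = s2).
  { intros a. destruct (classic (y1 a)) as [Ya|NYa].
    - destruct (lecard_on (Z a) m0 (eqcard_lecard _ _ (HZM a Ya))) as [f Hf]. exists f; auto.
    - exists (fun _ => m0); intros; contradiction. }
  destruct (fchoice _ _ _ Hpsi) as [psi Hpsi'].
  assert (HDM : lecard (elt D) (W * M)).
  { apply lecard_by with (Rl := fun d p => p = (phi (cof d), psi (cof d) (proj1_sig d))).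
    - intros d; eexists; reflexivity.
    - intros d d' p E1 E2. subst p. apply pair_equal_spec in E2. destruct E2 as [E3 E4].
      destruct (Hcof' d) as [[Yd Nd] Ld]. destruct (Hcof' d') as [[Yd' Nd'] Ld'].
      assert (Ec : cof d = cof d') by (apply Hphi; auto).
      rewrite <- Ec in E4, Ld'.
      apply sig_eq. apply (Hpsi' (cof d) (conj Yd Nd)); auto; left; auto. }
  assert (HZsum : forall a, lecard (elt (Z a)) (elt (Iseg (proj1_sig a)) + nat)).
  { intros a.
    apply lecard_by with (Rl := fun (u : elt (Z a)) (s : elt (Iseg (proj1_sig a)) + nat) =>
        match s with
        | inl k => proj1_sig k = proj1_sig u | inr m => e0 m = proj1_sig u end).
    - intros [s [Ls|[m Em]]].
      + exists (inl (exist (Iseg (proj1_sig a)) s Ls)). reflexivity.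
      + exists (inr m). exact Em.
    - intros u u' [k|m] E1 E2; apply sig_eq; exact (eq_trans (eq_sym E1) E2). }
  destruct (classic (exists b, y1 b /\ ~ lecard (elt (Iseg (proj1_sig b))) nat)) as [[b [Yb Hbn]]|Hall].
  - exfalso. apply NA. exists (proj1_sig b). split; [exact (proj2_sig b)|].
    assert (HWK : lecard W (elt (Iseg (proj1_sig b)))) by (apply (U1 W R HW); exact Hbn).
    assert (HnK : lecard nat (elt (Iseg (proj1_sig b))))
      by (eapply lecard_trans; [apply (nat_W W R HW)|exact HWK]).
    assert (HMK : lecard M (elt (Iseg (proj1_sig b)))).
    { eapply lecard_trans; [apply eqcard_lecard, eqcard_sym, HZM; exact Yb|].
      eapply lecard_trans; [|apply inf_sum; exact HnK].
      eapply lecard_trans; [|apply lecard_sum; [apply lecard_refl|exact HnK]].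
      apply HZsum. }
    eapply lecard_trans; [exact HDM|].
    eapply lecard_trans; [apply lecard_prod; [exact HWK|exact HMK]|].
    apply hessenberg; exact HnK.
  - assert (HMn : lecard M nat).
    { assert (Ca0 : lecard (elt (Iseg (proj1_sig a0))) nat).
      { apply NNPP; intros N. apply Hall. exists a0; auto. }
      eapply lecard_trans; [apply eqcard_lecard, eqcard_sym, HZM; exact Ha0|].
      eapply lecard_trans; [|apply natsum_nat].
      eapply lecard_trans; [|apply lecard_sum; [exact Ca0|apply lecard_refl]].
      apply HZsum. }
    eapply lecard_trans; [exact HDM|].
    eapply lecard_trans;
      [apply lecard_prod; [apply lecard_refl|eapply lecard_trans; [exact HMn|apply (nat_W W R HW)]]|].
    apply hessenberg, (nat_W W R HW).
Qed.

Lemma all_good : GoodT S.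
Proof.
  assert (H : forall t, GoodT (elt (Iseg t))).
  { intros t. induction t as [t IHt] using (well_founded_induction lt_wf).
    apply Lstep.
    - intros a b Hb' Hab. unfold Iseg in *. eauto.
    - intros s Hs. apply IHt. exact Hs. }
  apply (good_inj S (elt (fun _ : S => True))).
  - exists (fun s => exist _ s I). intros a b E; injection E; auto.
  - apply Lstep; auto.
Qed.
End Core.

Lemma part_a (W S P : Type) : is_stick W S -> is_stick' W P -> lecard S P.
Proof.
  intros [_ [_ Hmin]] [[[f Hf] [XP [HXP EP]]] _].
  destruct (pullback W P W f Hf XP HXP) as [X [HX L]].
  eapply lecard_trans; [apply Hmin; exact HX|].
  eapply lecard_trans; [exact L|]. apply eqcard_lecard; exact EP.
Qed.

Lemma part_c (W L L' S S' : Type) : lecard L L' -> is_stick_lam W L S -> is_stick_lam W L' S' -> lecard S S'.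
Proof.
  intros [f Hf] [_ [_ Hmin]] [_ [[X' [HX' E']] _]].
  destruct (pullback L L' W f Hf X' HX') as [X [HX LX]].
  eapply lecard_trans; [apply Hmin; exact HX|].
  eapply lecard_trans; [exact LX|]. apply eqcard_lecard; exact E'.
Qed.

Lemma stick_geS (W : Type) (R : W -> W -> Prop) (HW : is_omega1 W R) (S : Type) :
  is_stick W S -> lecard W S.
Proof.
  intros [_ [[X0 [HX0 E0]] _]].
  eapply lecard_trans; [apply (stick_ge W R HW X0 HX0)|]. apply eqcard_lecard; exact E0.
Qed.

Lemma part_d (W : Type) (R : W -> W -> Prop) (HW : is_omega1 W R) (S T P : Type) :
  is_stick W S -> is_stick_lam W S T -> is_stick' W P -> lecard S T /\ lecard T P.
Proof.
  intros HS HT HP. split.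
  - assert (HWS : lecard W S) by (eapply stick_geS; eauto).
    destruct HWS as [f Hf]. destruct HT as [_ [[XT [HXT ET]] _]].
    destruct (pullback W S W f Hf XT HXT) as [X [HX LX]].
    destruct HS as [_ [_ Hmin]].
    eapply lecard_trans; [apply Hmin; exact HX|].
    eapply lecard_trans; [exact LX|]. apply eqcard_lecard; exact ET.
  - destruct (part_a W S P HS HP) as [f Hf].
    destruct HP as [[_ [XP [HXP EP]]] _].
    destruct (pullback S P W f Hf XP HXP) as [X [HX LX]].
    destruct HT as [_ [_ Hmin]].
    eapply lecard_trans; [apply Hmin; exact HX|].
    eapply lecard_trans; [exact LX|]. apply eqcard_lecard; exact EP.
Qed.

Lemma core (W : Type) (R : W -> W -> Prop) (HW : is_omega1 W R) (S : Type) (X0 : (W -> Prop) -> Prop) :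
  stick_family W W X0 -> eqcard (elt X0) S -> lecard W S -> below_aleph_omega1 S ->
  exists X, stick_family S W X /\ lecard (elt X) S.
Proof.
  intros H1 H2 H3 H4. destruct (Br.WO_prop S) as [lt [wf [tr tri]]].
  exact (all_good W R HW S X0 H1 H2 H3 H4 lt wf tr tri).
Qed.

Lemma part_b (W : Type) (R : W -> W -> Prop) (HW : is_omega1 W R) (S : Type) :
  is_stick W S -> below_aleph_omega1 S ->
     (forall P : Type, is_stick' W P -> eqcard S P) /\
     (forall P2 : Type, is_stick'' W P2 -> lecard P2 S).
Proof.
  intros HS Hb.
  assert (HWS : lecard W S) by (eapply stick_geS; eauto).
  pose proof HS as [_ [[X0 [HX0 E0]] Hmin]].
  destruct (core W R HW S X0 HX0 E0 HWS Hb) as [X [HX LX]].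
  assert (EX : eqcard (elt X) S).
  { apply SB; auto. destruct HWS as [f Hf].
    destruct (pullback W S W f Hf X HX) as [X2 [HX2 L2]].
    eapply lecard_trans; [apply Hmin; exact HX2|exact L2]. }
  split.
  - intros P HP. apply SB.
    + eapply part_a; eauto.
    + destruct HP as [_ HPmin]. eapply HPmin; eauto.
  - intros P2 [_ HPmin]. eapply HPmin; eauto.
    destruct HX as [HX1 HX2]. split; auto.
    intros y Hy. destruct HWS as [f Hf].
    destruct (eqcard_sym _ _ Hy) as [g [Hg _]].
    destruct (HX2 (img (fun w => proj1_sig (g (f w))) (fun _ => True))) as [x [Xx Ix]].
    + eapply eqcard_trans; [apply eqcard_sym, img_eqcard|].
      * intros a b E. apply Hf, Hg, sig_eq. exact E.
      * exists (@proj1_sig _ _). split; [intros u v E; apply sig_eq; exact E|].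
        intros w. exists (exist _ w I). reflexivity.
    + exists x; split; auto. intros s Hs. destruct (Ix s Hs) as [w [_ E]]. subst s.
      exact (proj2_sig (g (f w))).
Qed.

Theorem lemma1p1 (W : Type) (R : W -> W -> Prop) (HW : is_omega1 W R) :
  (* (a) stick <= stick' *)
  (forall S P : Type, is_stick W S -> is_stick' W P -> lecard S P) /\
  (* (b) stick < aleph_{omega_1} -> stick = stick' and stick'' <= stick *)
  (forall S : Type, is_stick W S -> below_aleph_omega1 S ->
     (forall P : Type, is_stick' W P -> eqcard S P) /\
     (forall P2 : Type, is_stick'' W P2 -> lecard P2 S)) /\
  (* (c) lambda <= lambda' -> stick_lambda <= stick_lambda' *)
  (forall (L L' S S' : Type), lecard L L' ->
     is_stick_lam W L S -> is_stick_lam W L' S' -> lecard S S') /\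
  (* (d) stick <= stick_stick <= stick' *)
  (forall S T P : Type, is_stick W S -> is_stick_lam W S T -> is_stick' W P ->
     lecard S T /\ lecard T P).
Proof.
  split; [|split; [|split]].
  - intros S P. apply part_a.
  - intros S. apply (part_b W R HW).
  - intros L L' S S'. apply part_c.
  - intros S T P. apply (part_d W R HW).
Qed.
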